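(* Let $\mathbb{R}^4$ have coordinates $(x_1,y_1,x_2,y_2)$ and consider symplectic forms $\omega_1 = f_1(x_1,y_1)\,dx_1\wedge dy_1 + f_2(x_2,y_2)\,dx_2\wedge dy_2$ and $\omega_2 = g_1(x_1,y_1)\,dx_1\wedge dy_1 + g_2(x_2,y_2)\,dx_2\wedge dy_2$, where $f_1,f_2,g_1,g_2$ are smooth and nowhere vanishing. Let $\varphi = (\varphi^1,\varphi^2,\varphi^3,\varphi^4)\in\operatorname{Symp}(\mathbb{R}^4,\omega_{\mathrm{std}})$ with $\varphi^*\omega_1 = \omega_2$. Then for each $x\in\mathbb{R}^4$, either $f_1(\varphi^1(x),\varphi^2(x)) = g_1(x_1,y_1)$ and $f_2(\varphi^3(x),\varphi^4(x)) = g_2(x_2,y_2)$, or $f_1(\varphi^1(x),\varphi^2(x)) = g_2(x_2,y_2)$ and $f_2(\varphi^3(x),\varphi^4(x)) = g_1(x_1,y_1)$.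
   Context: $\omega_{\mathrm{std}} = dx_1\wedge dy_1 + dx_2\wedge dy_2$. $\operatorname{Symp}(\mathbb{R}^4,\omega_{\mathrm{std}})$ is the set of diffeomorphisms $\varphi$ of $\mathbb{R}^4$ with $\varphi^*\omega_{\mathrm{std}} = \omega_{\mathrm{std}}$, where $(\varphi^*\omega)(x)(v,w) = \omega(\varphi(x))(d\varphi_x v, d\varphi_x w)$. *)

(* Defs.v *)
(* R : realType, points of R^4 are row vectors 'rV[R]_4
   with coordinates (x1, y1, x2, y2) = entries 0,1,2,3. *)
From HB Require Import structures.
From mathcomp Require Import all_boot all_order all_algebra.
From mathcomp Require Import all_classical all_reals all_analysis.
Set Implicit Arguments. Unset Strict Implicit. Unset Printing Implicit Defensive.
Import Order.TTheory GRing.Theory Num.Theory.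
Import numFieldNormedType.Exports.
Local Open Scope ring_scope.

Section Defs.
Context {R : realType}.

Definition pcoord {n : nat} (v : 'rV[R]_n.+1) (k : nat) : R := v ord0 (inord k).

Fixpoint Ck {n : nat} (k : nat) (f : 'rV[R]_n -> R) : Prop :=
  match k with
  | 0 => continuous f
  | k'.+1 => (forall x, differentiable f x) /\
             forall i : 'I_n, Ck k' (fun x => 'D_(delta_mx 0 i) f x)
  end.

Definition smooth_fun {n : nat} (f : 'rV[R]_n -> R) : Prop := forall k, Ck k f.

Definition smooth_map {n m : nat} (F : 'rV[R]_n -> 'rV[R]_m) : Prop :=
  forall j : 'I_m, smooth_fun (fun x => F x ord0 j).

Definition smooth2 (f : R -> R -> R) : Prop :=
  smooth_fun (fun p : 'rV[R]_2 => f (pcoord p 0) (pcoord p 1)).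

Definition diffeo {n : nat} (phi : 'rV[R]_n -> 'rV[R]_n) : Prop :=
  smooth_map phi /\
  exists psi : 'rV[R]_n -> 'rV[R]_n,
    [/\ smooth_map psi, cancel phi psi & cancel psi phi].

Definition form4 := 'rV[R]_4 -> 'rV[R]_4 -> 'rV[R]_4 -> R.

Definition dx1dy1 (v w : 'rV[R]_4) : R := pcoord v 0 * pcoord w 1 - pcoord v 1 * pcoord w 0.
Definition dx2dy2 (v w : 'rV[R]_4) : R := pcoord v 2 * pcoord w 3 - pcoord v 3 * pcoord w 2.

Definition split_form (f1 f2 : R -> R -> R) : form4 :=
  fun p v w => f1 (pcoord p 0) (pcoord p 1) * dx1dy1 v w
             + f2 (pcoord p 2) (pcoord p 3) * dx2dy2 v w.

Definition omega_std : form4 := split_form (fun _ _ => 1) (fun _ _ => 1).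

Definition pullback (phi : 'rV[R]_4 -> 'rV[R]_4) (omega : form4) : form4 :=
  fun x v w => omega (phi x) ('d phi x v) ('d phi x w).

Definition is_symp_std (phi : 'rV[R]_4 -> 'rV[R]_4) : Prop :=
  diffeo phi /\ pullback phi omega_std = omega_std.

End Defs.

(* Main.v *)
Require Import Defs.
From HB Require Import structures.
From mathcomp Require Import all_boot all_order all_algebra.
From mathcomp Require Import all_classical all_reals all_analysis.
From mathcomp Require Import ring lra.
Import Order.TTheory GRing.Theory Num.Theory.
Import numFieldNormedType.Exports.
Local Open Scope ring_scope.

Lemma alg (R : realFieldType) (a b c d p12 p13 p14 p23 p24 p34 q12 q13 q14 q23 q24 q34 : R) :
  p12 + q12 = 1 -> p34 + q34 = 1 -> p13 + q13 = 0 -> p14 + q14 = 0 -> p23 + q23 = 0 -> p24 + q24 = 0 ->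
  a * p12 + b * q12 = c -> a * p34 + b * q34 = d ->
  a * p13 + b * q13 = 0 -> a * p14 + b * q14 = 0 -> a * p23 + b * q23 = 0 -> a * p24 + b * q24 = 0 ->
  p12 * p34 - p13 * p24 + p14 * p23 = 0 ->
  q12 * q34 - q13 * q24 + q14 * q23 = 0 ->
  (a = c /\ b = d) \/ (a = d /\ b = c).
Proof.
move=> h12 h34 h13 h14 h23 h24 k12 k34 k13 k14 k23 k24 pp pq.
have [ab|nab] := eqVneq a b.
  subst b; left; split.
    by rewrite -k12 -mulrDr h12 mulr1.
  by rewrite -k34 -mulrDr h34 mulr1.
have nz : a - b != 0 by rewrite subr_eq0.
have z : forall p q : R, p + q = 0 -> a * p + b * q = 0 -> p = 0 /\ q = 0.
  move=> p q hpq hk; have hq : q = - p by apply/eqP; rewrite -addr_eq0 addrC hpq.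
  subst q; have : (a - b) * p = 0 by rewrite -hk; ring.
  by move/eqP; rewrite mulf_eq0 (negPf nz) /= => /eqP ->; rewrite oppr0.
have [z13 z13'] := z _ _ h13 k13; have [z14 z14'] := z _ _ h14 k14.
have [z23 z23'] := z _ _ h23 k23; have [z24 z24'] := z _ _ h24 k24.
rewrite z13 z14 z23 z24 !mul0r !subr0 !addr0 in pp.
rewrite z13' z14' z23' z24' !mul0r !subr0 !addr0 in pq.
move/eqP: pp; rewrite mulf_eq0 => /orP [] /eqP p0.
- have q1 : q12 = 1 by rewrite -h12 p0 add0r.
  move/eqP: pq; rewrite q1 mul1r => /eqP q0.
  have p1 : p34 = 1 by rewrite -h34 q0 addr0.
  right; split; [by rewrite -k34 p1 q0; ring | by rewrite -k12 p0 q1; ring].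
- have q1 : q34 = 1 by rewrite -h34 p0 add0r.
  move/eqP: pq; rewrite q1 mulr1 => /eqP q0.
  have p1 : p12 = 1 by rewrite -h12 q0 addr0.
  left; split; [by rewrite -k12 p1 q0; ring | by rewrite -k34 p0 q1; ring].
Qed.

Lemma pe (R : realType) (i k : nat) : (i < 4)%N -> (k < 4)%N ->
  pcoord (delta_mx 0 (inord i) : 'rV[R]_4) k = (i == k)%:R.
Proof.
move=> hi hk; by rewrite /pcoord mxE /= -(inj_eq val_inj) /= !inordK // eq_sym.
Qed.

Theorem lemma6p1 (R : realType) (f1 f2 g1 g2 : R -> R -> R)
  (phi : 'rV[R]_4 -> 'rV[R]_4) :
  smooth2 f1 -> smooth2 f2 -> smooth2 g1 -> smooth2 g2 ->
  (forall a b, f1 a b != 0) -> (forall a b, f2 a b != 0) ->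
  (forall a b, g1 a b != 0) -> (forall a b, g2 a b != 0) ->
  is_symp_std phi ->
  pullback phi (split_form f1 f2) = split_form g1 g2 ->
  forall x : 'rV[R]_4,
    (f1 (pcoord (phi x) 0) (pcoord (phi x) 1) = g1 (pcoord x 0) (pcoord x 1) /\
     f2 (pcoord (phi x) 2) (pcoord (phi x) 3) = g2 (pcoord x 2) (pcoord x 3))
    \/
    (f1 (pcoord (phi x) 0) (pcoord (phi x) 1) = g2 (pcoord x 2) (pcoord x 3) /\
     f2 (pcoord (phi x) 2) (pcoord (phi x) 3) = g1 (pcoord x 0) (pcoord x 1)).
Proof.
move=> _ _ _ _ _ _ _ _ [_ Hs] Hp x.
set e := fun i : nat => (delta_mx 0 (inord i) : 'rV[R]_4).
set L := 'd phi x.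
have S i j := congr1 (fun F => F x (e i) (e j)) Hs.
have P i j := congr1 (fun F => F x (e i) (e j)) Hp.
move: (S 0%N 1%N) (S 2%N 3%N) (S 0%N 2%N) (S 0%N 3%N) (S 1%N 2%N) (S 1%N 3%N)
      (P 0%N 1%N) (P 2%N 3%N) (P 0%N 2%N) (P 0%N 3%N) (P 1%N 2%N) (P 1%N 3%N).
rewrite /pullback /omega_std /split_form /= /dx1dy1 /dx2dy2.
rewrite /e !pe //= .
rewrite !(mul1r, mul0r, mulr1, mulr0, subr0, sub0r, addr0, add0r, oppr0).
move=> s01 s23 s02 s03 s12 s13 p01 p23 p02 p03 p12 p13.
apply: (@alg R _ _ _ _ _ _ _ _ _ _ _ _ _ _ _ _ s01 s23 s02 s03 s12 s13 p01 p23 p02 p03 p12 p13); ring.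
Qed.
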